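(* Let $k\ge2$, let $b$ be an irreducible Brauer diagram of size $k$ (i.e. $\mathrm{nc}(b\vee\mathbf{1}_k)=1$), and let $1\le i\ne j\le k$ and $e=e_{ij}$. Then $\mathrm{nc}(e\vee b)-\mathrm{nc}(b\vee\mathbf{1}_k)\in\{0,1\}$, and $\mathrm{nc}(e\vee b)=\mathrm{nc}(b\vee\mathbf{1}_k)+1$ if and only if $s(i)s(j)=-1$ for any orientation $s$ of $b$.
   Context: A Brauer diagram of size $k$ is a partition of $\{1,\dots,k,1',\dots,k'\}$ into two-element blocks (links). For partitions, $\vee$ is the join (finest common coarsening) and $\mathrm{nc}$ the number of blocks; $\mathbf{1}_k=\{\{x,x'\}:x\le k\}$. The projector $e_{ij}$ is the Brauer diagram $\{\{i,j\},\{i',j'\}\}\cup\{\{x,x'\}:x\ne i,j\}$. Orientation: let $\Gamma_b$ be the graph with vertices $\{1,\dots,k,1',\dots,k'\}$ whose edges are the links of $b$ together with the vertical edges $\{x,x'\}$, $x\le k$; each connected component is a cycle. An orientation of $b$ is a choice of orientation of each cycle of $\Gamma_b$; its sign function $s:\{1,\dots,k\}\to\{-1,1\}$ is $s(x)=1$ if the link of $b$ containing $x$ is incoming at $x$ for the chosen orientation, and $s(x)=-1$ otherwise. *)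

(* Defs.v *)
From mathcomp Require Import all_boot all_order all_algebra.
Set Implicit Arguments. Unset Strict Implicit. Unset Printing Implicit Defensive.

Section Brauer.
Variable k : nat.

(* vertices {1..k} (top, inl) and {1'..k'} (bottom, inr); 0-based indices *)
Definition vert := ('I_k + 'I_k)%type.
Definition top (x : 'I_k) : vert := inl x.
Definition bot (x : 'I_k) : vert := inr x.
Definition vidx (v : vert) : 'I_k := match v with inl x => x | inr x => x end.

Definition is_partition (P : {set {set vert}}) := partition P [set: vert].

Definition is_brauer (b : {set {set vert}}) :=
  is_partition b /\ (forall L, L \in b -> #|L| = 2).

Definition pjoin (P Q : {set {set vert}}) : {set {set vert}} :=
  equivalence_partition
    (connect (fun x y => (pblock P x == pblock P y) || (pblock Q x == pblock Q y)))
    [set: vert].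

Definition nc (P : {set {set vert}}) : nat := #|P|.

Definition one_k : {set {set vert}} := [set [set top x; bot x] | x : 'I_k].

Definition e_proj (i j : 'I_k) : {set {set vert}} :=
  [set [set top i; top j]; [set bot i; bot j]]
  :|: [set [set top x; bot x] | x in [set x : 'I_k | (x != i) && (x != j)]].

(* An orientation of b: a direction (head) for every edge of Gamma_b
   (hl L = head of link L, hv x = head of vertical edge {x,x'}) such that
   every cycle is a directed cycle, i.e. at every vertex exactly one of its
   two incident edges is incoming. *)
Definition is_orientation (b : {set {set vert}}) (hl : {set vert} -> vert)
  (hv : 'I_k -> vert) :=
  [/\ forall L, L \in b -> hl L \in L,
      forall x, hv x = top x \/ hv x = bot x
    & forall v, (hl (pblock b v) == v) (+) (hv (vidx v) == v)].

Definition orient_sign (b : {set {set vert}}) (hl : {set vert} -> vert)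
  (x : 'I_k) : int :=
  if hl (pblock b (top x)) == top x then 1%Z else (-1)%Z.

End Brauer.

(* Main.v *)
Require Import Defs.
From mathcomp Require Import all_boot all_algebra zify.
Set Implicit Arguments. Unset Strict Implicit. Unset Printing Implicit Defensive.


Lemma pblock_uniq (T : finType) (P : {set {set T}}) x B0 :
  B0 \in P -> x \in B0 -> (forall B, B \in P -> x \in B -> B = B0) ->
  pblock P x = B0.
Proof.
move=> PB0 xB0 H; rewrite /pblock; case: pickP => [B /andP[PB xB] | /(_ B0)].
  by rewrite /= (H B PB xB).
by rewrite /= PB0 xB0.
Qed.

Lemma two_elem (T : finType) (L : {set T}) x y z :
  #|L| = 2 -> x \in L -> y \in L -> z \in L -> x != y -> z = x \/ z = y.
Proof.
move=> cL xL yL zL nxy.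
have [->|nzx] := eqVneq z x; first by left.
have [->|nzy] := eqVneq z y; first by right.
have sub : [set x; y; z] \subset L.
  by apply/subsetP => w; rewrite !inE => /orP[/orP[]|] /eqP ->.
have := subset_leq_card sub; rewrite cL.
have -> : #|[set x; y; z]| = 3.
  rewrite [[set x; y; z]]setUC cardsU1 !inE cards2 nxy.
  by rewrite (negbTE nzx) (negbTE nzy).
by [].
Qed.

Lemma nc_EP_two (T : finType) (R : rel T) (a c : T) :
  symmetric R -> (forall x, connect R x a || connect R x c) ->
  #|equivalence_partition (connect R) [set: T]| = if connect R a c then 1 else 2.
Proof.
move=> sR Hx; have cs := sym_connect_sym sR.
set Px := fun x => [set y in [set: T] | connect R x y].
have PxE x y : connect R x y -> Px x = Px y.
  move=> cxy; apply/setP => z; rewrite !inE /=; apply/idP/idP => H.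
    by apply: connect_trans H; rewrite cs.
  exact: connect_trans cxy H.
have -> : equivalence_partition (connect R) [set: T] = [set Px a; Px c].
  apply/setP => B; rewrite !inE; apply/imsetP/idP.
    case=> x _ ->; rewrite -/(Px x); case/orP: (Hx x) => /PxE ->; rewrite eqxx ?orbT //.
  by case/orP => /eqP ->; [exists a | exists c].
rewrite cards2; case: ifP => [/PxE -> | nac]; first by rewrite eqxx.
suff -> : (Px a != Px c) by [].
apply/eqP => E; have : c \in Px c by rewrite /Px !inE connect0.
by rewrite -E /Px !inE nac.
Qed.

Lemma nc_EP_one (T : finType) (R : rel T) x y :
  symmetric R -> #|equivalence_partition (connect R) [set: T]| = 1 ->
  connect R x y.
Proof.
move=> sR /eqP/cards1P[B EB].
have hx : [set z in [set: T] | connect R x z] \in [set B] by rewrite -EB; apply: imset_f.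
have hy : [set z in [set: T] | connect R y z] \in [set B] by rewrite -EB; apply: imset_f.
move: hx hy; rewrite !inE => /eqP ex /eqP ey.
have : y \in [set z in [set: T] | connect R y z] by rewrite !inE connect0.
by rewrite ey -ex !inE.
Qed.


Definition flip k (v : vert k) : vert k :=
  match v with inl x => inr x | inr x => inl x end.

Lemma vidx_flip k (v : vert k) : vidx (flip v) = vidx v. Proof. by case: v. Qed.
Lemma flipK k : involutive (@flip k). Proof. by case. Qed.
Lemma flip_neq k (v : vert k) : flip v != v. Proof. by case: v. Qed.
Lemma vidx_cases k (u v : vert k) : vidx u = vidx v -> u = v \/ u = flip v.
Proof. by case: u; case: v => x y /= ->; auto. Qed.

Lemma pblock_one k (v : vert k) :
  pblock (one_k k) v = [set top (vidx v); bot (vidx v)].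
Proof.
apply: pblock_uniq; first by apply: imset_f.
  by case: v => x; rewrite !inE eqxx ?orbT.
move=> B /imsetP[x _ ->]; case: v => y; rewrite !inE /top /bot => /orP[] /eqP [->] //=.
Qed.

Lemma one_eq k (u v : vert k) :
  pblock (one_k k) u == pblock (one_k k) v -> vidx u = vidx v.
Proof.
rewrite !pblock_one => /eqP E.
have : top (vidx u) \in [set top (vidx v); bot (vidx v)] by rewrite -E !inE eqxx.
by rewrite !inE => /orP[] /eqP [].
Qed.

Definition eblk k (i j : 'I_k) (v : vert k) : {set vert k} :=
  if (vidx v != i) && (vidx v != j) then [set top (vidx v); bot (vidx v)]
  else match v with inl _ => [set top i; top j] | inr _ => [set bot i; bot j] end.

Lemma eblk_in k (i j : 'I_k) v : v \in eblk i j v.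
Proof.
rewrite /eblk; case: ifP => h; case: v h => x /= h; rewrite !inE /top /bot;
  try by rewrite eqxx ?orbT.
- by move: h => /negbT; rewrite negb_and !negbK => /orP[] /eqP ->; rewrite eqxx ?orbT.
- by move: h => /negbT; rewrite negb_and !negbK => /orP[] /eqP ->; rewrite eqxx ?orbT.
Qed.

Lemma pblock_e k (i j : 'I_k) v : pblock (e_proj i j) v = eblk i j v.
Proof.
apply: pblock_uniq; last first.
- move=> B; rewrite !inE => /orP[/orP[]/eqP ->|].
  + rewrite !inE /eblk => /orP[] /eqP -> /=; rewrite eqxx ?andbF //.
  + rewrite !inE /eblk => /orP[] /eqP -> /=; rewrite eqxx ?andbF //.
  + move=> /imsetP[x]; rewrite inE => hx -> .
    rewrite !inE /eblk => /orP[] /eqP -> /=; by rewrite hx.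
- exact: eblk_in.
- rewrite /eblk; case: ifP => h.
    by rewrite inE; apply/orP; right; apply: imset_f; rewrite inE.
  by case: v h => x _; rewrite !inE eqxx ?orbT.
Qed.


Section O.
Context (k : nat) (b : {set {set vert k}}) (hl : {set vert k} -> vert k)
  (hv : 'I_k -> vert k) (hb : is_brauer b) (ho : is_orientation b hl hv).

Lemma pb_in v : v \in pblock b v.
Proof. by rewrite mem_pblock (cover_partition hb.1) inE. Qed.
Lemma pb_mem v : pblock b v \in b.
Proof. by apply: pblock_mem; rewrite (cover_partition hb.1) inE. Qed.
Lemma pb_def L v : L \in b -> v \in L -> pblock b v = L.
Proof. exact: def_pblock (partition_trivIset hb.1). Qed.
Lemma pb_card v : #|pblock b v| = 2.
Proof. exact: hb.2 (pb_mem v). Qed.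
Lemma hl_in v : hl (pblock b v) \in pblock b v.
Proof. by case: ho => H _ _; apply: H; apply: pb_mem. Qed.
Lemma hv_cases x : hv x = top x \/ hv x = bot x.
Proof. by case: ho => _ H _. Qed.
Lemma oxor v : (hl (pblock b v) == v) (+) (hv (vidx v) == v).
Proof. by case: ho => _ _ H. Qed.
Lemma vidx_hv x : vidx (hv x) = x.
Proof. by case: (hv_cases x) => ->. Qed.

Definition tail x := flip (hv x).
Lemma vidx_tail x : vidx (tail x) = x.
Proof. by rewrite /tail vidx_flip vidx_hv. Qed.

Definition fo v := if hl (pblock b v) == v then flip v else hl (pblock b v).

Lemma hv_flip v : hl (pblock b v) == v -> hv (vidx v) = flip v.
Proof.
move=> h; have := oxor v; rewrite h /= => /negbTE hn.
have [|] := vidx_cases (vidx_hv (vidx v)); last by [].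
by move=> e; rewrite e eqxx in hn.
Qed.

Lemma hl_tail x : hl (pblock b (tail x)) == tail x.
Proof.
have := oxor (tail x); rewrite vidx_tail.
have -> : (hv x == tail x) = false by rewrite /tail eq_sym; apply/negbTE/flip_neq.
by rewrite addbF.
Qed.

Lemma fo_tail x : fo (tail x) = hv x.
Proof. by rewrite /fo hl_tail /tail flipK. Qed.

Lemma fo_inj : injective fo.
Proof.
have contra x y : hl (pblock b x) == x -> hl (pblock b y) != y ->
    flip x = hl (pblock b y) -> False.
  move=> hx hy e.
  have h1 := hv_flip hx.
  have hz : pblock b (flip x) = pblock b y by rewrite e; apply: pb_def (pb_mem _) (hl_in _).
  have := oxor (flip x); rewrite hz -e eqxx vidx_flip h1 eqxx.
  by [].
move=> x y; rewrite /fo; case: ifP => hx; case: ifP => hy.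
- exact: (can_inj (@flipK k)).
- by move=> e; case: (contra x y); rewrite ?hx ?hy.
- by move=> e; case: (contra y x); rewrite ?hx ?hy.
- move=> e; have [->|nxy] := eqVneq x y; first by [].
  have ex : pblock b (hl (pblock b x)) = pblock b x := pb_def (pb_mem _) (hl_in _).
  have ey : pblock b (hl (pblock b y)) = pblock b y := pb_def (pb_mem _) (hl_in _).
  have Lxy : pblock b x = pblock b y by rewrite -ex -ey e.
  have yL : y \in pblock b x by rewrite Lxy pb_in.
  case: (two_elem (pb_card x) (pb_in x) yL (hl_in x) nxy) => e2.
    by rewrite e2 eqxx in hx.
  by rewrite -e e2 eqxx in hy.
Qed.

Lemma same_b x y : pblock b x = pblock b y -> x != y ->
  (hl (pblock b x) != x /\ fo x = y) \/ (hl (pblock b y) != y /\ fo y = x).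
Proof.
move=> Lxy nxy; rewrite /fo.
have [hx|hx] := eqVneq (hl (pblock b x)) x.
  right; rewrite -Lxy hx (negbTE nxy); split=> //.
left; split=> //.
have yL : y \in pblock b x by rewrite Lxy pb_in.
by case: (two_elem (pb_card x) (pb_in x) yL (hl_in x) nxy) => // e; rewrite e eqxx in hx.
Qed.

Definition Rb1 := fun x y : vert k =>
  (pblock b x == pblock b y) || (pblock (one_k k) x == pblock (one_k k) y).

Lemma Rb1_fcon x y : Rb1 x y -> fconnect fo x y.
Proof.
have fsym := fconnect_sym fo_inj.
case/orP => [/eqP Lxy | /one_eq vxy].
  have [->|nxy] := eqVneq x y; first exact: connect0.
  case: (same_b Lxy nxy) => -[_ e]; first by apply: connect1; rewrite /frel /= e.
  by rewrite fsym; apply: connect1; rewrite /frel /= e.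
case: (vidx_cases (esym vxy)) => [->|->]; first exact: connect0.
have [hx|hx] := eqVneq (hl (pblock b x)) x.
  by apply: connect1; rewrite /frel /= /fo hx !eqxx.
have hvx : hv (vidx x) == x by move: (oxor x); rewrite (negbTE hx).
have hy : hl (pblock b (flip x)) == flip x.
  move: (oxor (flip x)); rewrite vidx_flip (eqP hvx).
  by rewrite [x == flip x]eq_sym (negbTE (flip_neq x)) addbF.
by rewrite fsym; apply: connect1; rewrite /frel /= /fo hy flipK eqxx.
Qed.

End O.


Definition Reb k (b : {set {set vert k}}) (i j : 'I_k) := fun x y : vert k =>
  (pblock (e_proj i j) x == pblock (e_proj i j) y) || (pblock b x == pblock b y).

Lemma Reb_sym k (b : {set {set vert k}}) i j : symmetric (Reb b i j).
Proof. by move=> x y; rewrite /Reb eq_sym [pblock b x == _]eq_sym. Qed.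

Lemma hv_or_tail k (b : {set {set vert k}}) hl hv (ho : is_orientation b hl hv) v :
  v = hv (vidx v) \/ v = tail hv (vidx v).
Proof.
case: (vidx_cases (vidx_hv ho (vidx v))) => e; first by left.
by right; rewrite /tail e flipK.
Qed.

Section P.
Context (k : nat) (b : {set {set vert k}}) (hl : {set vert k} -> vert k)
  (hv : 'I_k -> vert k) (hb : is_brauer b) (ho : is_orientation b hl hv)
  (i j : 'I_k) (nij : i != j)
  (allc : forall v, fconnect (fo b hl) (hv i) v).

Let f := fo b hl.
Let n := order f (hv i).
Let pos v := findex f (hv i) v.

Lemma iter_pos v : iter (pos v) f (hv i) = v.
Proof. exact: iter_findex (allc v). Qed.
Lemma pos_lt v : pos v < n.
Proof. exact: findex_max (allc v). Qed.
Lemma pos_inj u v : pos u = pos v -> u = v.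
Proof. by move=> e; rewrite -(iter_pos u) -(iter_pos v) e. Qed.
Lemma pos_iter r : r < n -> pos (iter r f (hv i)) = r.
Proof. exact: findex_iter. Qed.

Lemma pos_f v : pos (f v) = if (pos v).+1 < n then (pos v).+1 else 0.
Proof.
have e : f v = iter (pos v).+1 f (hv i) by rewrite iterS iter_pos.
case: ifP => h; first by rewrite e pos_iter.
have e2 : (pos v).+1 = n by have := pos_lt v; lia.
by rewrite e e2 /n (iter_order (fo_inj hb ho)) /pos findex0.
Qed.

Lemma pos0 : pos (hv i) = 0.
Proof. exact: findex0. Qed.

Lemma pos_ti : pos (tail hv i) = n.-1.
Proof.
have := pos_f (tail hv i); rewrite /f (fo_tail ho) pos0.
have := pos_lt (tail hv i); case: ifP => //; lia.
Qed.

Lemma vidx_neq_tail x v : vidx v != x -> v != tail hv x.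
Proof. by apply: contraNneq => ->; rewrite (vidx_tail ho). Qed.

Lemma n_gt1 : 1 < n.
Proof.
have : pos (tail hv i) != pos (hv i).
  apply/eqP => /pos_inj e; have := flip_neq (hv i); by rewrite -/(tail hv i) e eqxx.
rewrite pos_ti pos0; have := pos_lt (hv i); lia.
Qed.

Let q := pos (tail hv j).

Lemma q_lt : q < n.-1.
Proof.
have : q != n.-1.
  rewrite -pos_ti; apply/eqP => /pos_inj e.
  by have := vidx_tail ho j; rewrite e (vidx_tail ho) => /eqP; rewrite (negbTE nij).
have := pos_lt (tail hv j); rewrite -/q; lia.
Qed.

Lemma pos_hj : pos (hv j) = q.+1.
Proof.
have := pos_f (tail hv j); rewrite /f (fo_tail ho) -/q.
by have := q_lt; case: ifP => //; lia.
Qed.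

Lemma step x : x != tail hv i -> x != tail hv j -> pos (f x) = (pos x).+1 /\ pos x != q.
Proof.
move=> xi xj; split; last by apply: contra xj => /eqP /pos_inj ->.
have : pos x != n.-1 by rewrite -pos_ti; apply: contra xi => /eqP /pos_inj ->.
rewrite pos_f; have := pos_lt x; case: ifP => //; lia.
Qed.

Local Notation Reb := (Reb b i j).

Lemma edge x : x != tail hv i -> x != tail hv j -> Reb x (f x).
Proof.
move=> xi xj; rewrite /Reb /f /fo /=.
have [h|h] := eqVneq (hl (pblock b x)) x.
  have e := hv_flip ho (introT eqP h).
  have ex : x = tail hv (vidx x) by rewrite /tail e flipK.
  have vi : vidx x != i by apply: contra xi => /eqP e2; rewrite ex e2.
  have vj : vidx x != j by apply: contra xj => /eqP e2; rewrite ex e2.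
  by rewrite !pblock_e /eblk vidx_flip vi vj eqxx.
by rewrite (pb_def hb (pb_mem hb x) (hl_in hb ho x)) eqxx orbT.
Qed.

Lemma arc a m : (forall r, a <= r < a + m -> r < n.-1 /\ r != q) ->
  connect Reb (iter a f (hv i)) (iter (a + m) f (hv i)).
Proof.
elim: m => [|m IH] H; first by rewrite addn0 connect0.
apply: connect_trans (IH _) _.
  by move=> r /andP[r1 r2]; apply: H; rewrite r1 /=; lia.
rewrite addnS /=; apply: connect1; have [r1 r2] := H (a + m) (ltac:(lia)).
have hp : pos (iter (a + m) f (hv i)) = a + m by apply: pos_iter; lia.
apply: edge.
  by apply/eqP => e; move: hp; rewrite e pos_ti; lia.
by apply/eqP => e; move: hp r2; rewrite e -/q => ->; rewrite eqxx.
Qed.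

Lemma conn_A : connect Reb (hv i) (tail hv j).
Proof.
have := @arc 0 q; rewrite add0n /= iter_pos; apply=> r h.
have := q_lt; split; lia.
Qed.

Lemma conn_B : connect Reb (hv j) (tail hv i).
Proof.
have hq := q_lt.
have H := @arc q.+1 (n.-1 - q.+1).
have e1 : q.+1 + (n.-1 - q.+1) = pos (tail hv i) by rewrite pos_ti; lia.
have e2 : iter q.+1 f (hv i) = hv j by rewrite -pos_hj iter_pos.
rewrite -e2 -(iter_pos (tail hv i)) -e1; apply: H => r /andP[h1 h2].
split; lia.
Qed.

Let c v := pos v <= q.

Lemma c_step x : x != tail hv i -> x != tail hv j -> c (f x) = c x.
Proof.
move=> xi xj; have [e1 e2] := step xi xj; rewrite /c e1.
apply/idP/idP; lia.
Qed.

Lemma c_vert z : z != i -> z != j -> c (hv z) = c (tail hv z).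
Proof.
move=> zi zj; rewrite -(fo_tail ho z) -/f c_step //;
  by apply: vidx_neq_tail; rewrite (vidx_tail ho).
Qed.

Lemma c_hi : c (hv i) = true.  Proof. by rewrite /c pos0. Qed.
Lemma c_ti : c (tail hv i) = false.
Proof. by rewrite /c pos_ti; have := q_lt; lia. Qed.
Lemma c_tj : c (tail hv j) = true.  Proof. exact: leqnn. Qed.
Lemma c_hj : c (hv j) = false.
Proof. by rewrite /c pos_hj; lia. Qed.

Lemma c_any v : vidx v != i -> vidx v != j -> c v = c (hv (vidx v)).
Proof.
move=> vi vj; case: (hv_or_tail ho v) => e; first by rewrite -e.
by rewrite c_vert // -e.
Qed.

Lemma cij (side : (hv i == inl i) != (hv j == inl j)) :
  c (inl i) = c (inl j) /\ c (inr i) = c (inr j).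
Proof.
have Ci := c_hi; have Cti := c_ti; have Ctj := c_tj; have Chj := c_hj.
rewrite /tail in Cti Ctj.
case: (hv_cases ho i) => hi; case: (hv_cases ho j) => hj;
  rewrite /top /bot in hi hj; rewrite hi hj /= in side Ci Cti Ctj Chj;
  rewrite ?eqxx //= in side; by rewrite Ci Cti Ctj Chj.
Qed.

Lemma c_inv (side : (hv i == inl i) != (hv j == inl j)) x y : Reb x y -> c x = c y.
Proof.
case/orP => [/eqP E | /eqP L].
  rewrite !pblock_e in E.
  have : y \in eblk i j x by rewrite E eblk_in.
  rewrite /eblk; case: ifP => [/andP[xi xj] | hx].
    rewrite !inE /top /bot => yv.
    have vy : vidx y = vidx x by case/orP: yv => /eqP ->.
    by rewrite c_any // (@c_any y) ?vy.
  have [C1 C2] := cij side.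
  move: hx => /negbT; rewrite negb_and !negbK => hx.
  clear E; case: x hx => xx /= /orP[] /eqP -> ; rewrite !inE /top /bot => /orP[] /eqP -> //.
have [->|nxy] := eqVneq x y; first by [].
case: (same_b hb ho L nxy) => -[h e].
  rewrite -e c_step //; apply: contraNneq h => ->; exact: hl_tail.
rewrite -e c_step //; apply: contraNneq h => ->; exact: hl_tail.
Qed.

Lemma c_conn (side : (hv i == inl i) != (hv j == inl j)) x y :
  connect Reb x y -> c x = c y.
Proof.
move/connectP => [p pth ->]; elim: p x pth => //= z p IH x /andP[exy pth].
by rewrite (c_inv side exy) IH.
Qed.

Lemma noconn (side : (hv i == inl i) != (hv j == inl j)) :
  ~~ connect Reb (inl i) (inr i).
Proof.
apply/negP => /(c_conn side); have Ci := c_hi; have Cti := c_ti.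
rewrite /tail in Cti.
by case: (hv_cases ho i) => hi; rewrite /top /bot in hi; rewrite hi /= in Ci Cti;
  rewrite Ci Cti.
Qed.

Lemma yesconn (side : (hv i == inl i) = (hv j == inl j)) :
  connect Reb (inl i) (inr i).
Proof.
have sR := sym_connect_sym (@Reb_sym k b i j).
have E1 : Reb (hv i) (hv j) /\ Reb (tail hv i) (tail hv j).
  rewrite /tail /Reb.
  case: (hv_cases ho i) => hi; case: (hv_cases ho j) => hj;
    rewrite /top /bot in hi hj; rewrite hi hj /= in side *;
    rewrite ?eqxx //= in side; rewrite !pblock_e /eblk /= !eqxx /= ?andbF //.
  1,2: by rewrite !eqxx.
have [E2 E3] := E1.
have C : connect Reb (hv i) (tail hv i).
  apply: connect_trans conn_A _; rewrite sR; exact: connect1.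
case: (hv_cases ho i) => hi; move: C; rewrite /tail hi /top /bot //=.
by rewrite sR.
Qed.

End P.


Section F.
Context (k : nat) (b : {set {set vert k}}) (i j : 'I_k).

Lemma near v : (vidx v == i) || (vidx v == j) ->
  connect (Reb b i j) v (inl i) || connect (Reb b i j) v (inr i).
Proof.
have sR := sym_connect_sym (@Reb_sym k b i j).
case: v => x /= /orP[] /eqP ->; rewrite ?connect0 ?orbT //.
  apply/orP; left; apply: (@connect1 _ (Reb b i j)).
  by rewrite /Reb !pblock_e /eblk /= !eqxx /= ?andbF /= eqxx.
apply/orP; right; apply: (@connect1 _ (Reb b i j)).
by rewrite /Reb !pblock_e /eblk /= !eqxx /= ?andbF /= eqxx.
Qed.

Lemma Rb1_Reb v w : ~~ ((vidx v == i) || (vidx v == j)) -> Rb1 b v w -> Reb b i j v w.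
Proof.
rewrite negb_or => /andP[vi vj] /orP[e | /one_eq e]; first by rewrite /Reb e orbT.
by rewrite /Reb !pblock_e /eblk -e vi vj /= eqxx.
Qed.

Lemma all_near_path p v : path (Rb1 b) v p ->
  (vidx (last v p) == i) || (vidx (last v p) == j) ->
  connect (Reb b i j) v (inl i) || connect (Reb b i j) v (inr i).
Proof.
elim: p v => [|w p IH] v /=; first by move=> _; apply: near.
case/andP => e pth hl.
case h : ((vidx v == i) || (vidx v == j)); first by apply: near.
have e' := Rb1_Reb (negbT h) e.
case/orP: (IH w pth hl) => c; apply/orP; [left|right];
  exact: connect_trans (connect1 e') c.
Qed.

End F.

Unset Implicit Arguments.

Theorem proposition4p7 (k : nat) (b : {set {set vert k}}) (i j : 'I_k) :
  2 <= k ->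
  is_brauer b ->
  nc (pjoin b (one_k k)) = 1 ->
  i != j ->
  (nc (pjoin (e_proj i j) b) = nc (pjoin b (one_k k))
   \/ nc (pjoin (e_proj i j) b) = (nc (pjoin b (one_k k))).+1)
  /\ (forall (hl : {set vert k} -> vert k) (hv : 'I_k -> vert k),
        is_orientation b hl hv ->
        (nc (pjoin (e_proj i j) b) = (nc (pjoin b (one_k k))).+1
         <-> (orient_sign b hl i * orient_sign b hl j = -1)%R)).
Proof.
move=> hk hb hirr nij.
have symb : symmetric (Rb1 b).
  by move=> x y; rewrite /Rb1 eq_sym [pblock (one_k k) x == _]eq_sym.
have hirr' : forall x y, connect (Rb1 b) x y.
  by move=> x y; apply: (nc_EP_one _ _ symb); exact: hirr.
have allN v : connect (Reb b i j) v (inl i) || connect (Reb b i j) v (inr i).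
  have /connectP [p pth e] := hirr' v (inl i).
  by apply: (all_near_path pth); rewrite -e /= eqxx.
have hcount : nc (pjoin (e_proj i j) b) =
    if connect (Reb b i j) (inl i) (inr i) then 1 else 2.
  exact: (nc_EP_two (@Reb_sym k b i j) allN).
rewrite hirr hcount; split; first by case: ifP; auto.
move=> hl hv ho.
have allc v : fconnect (fo b hl) (hv i) v.
  apply: (connect_sub _ (hirr' _ _)) => x y h; exact: Rb1_fcon hb ho x y h.
have sgn x : (hl (pblock b (top x)) == top x) = ~~ (hv x == inl x).
  have := oxor ho (top x); rewrite /top /=.
  by case: (hl _ == _); case: (hv x == _).
rewrite /orient_sign !sgn.
case E: (hv i == inl i); case F: (hv j == inl j).
- by rewrite (yesconn hb ho nij allc) ?E ?F.
- by rewrite (negbTE (noconn hb ho nij allc _)) ?E ?F.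
- by rewrite (negbTE (noconn hb ho nij allc _)) ?E ?F.
- by rewrite (yesconn hb ho nij allc) ?E ?F.
Qed.
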